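(* Consider $n\ge 2$ agents in $\mathbb{R}^d$ ($d\ge 2$) with undirected graph $\mathcal{G}=(\mathcal{V},\mathcal{E})$, desired bearings $\{g_{ij}^*\}_{(i,j)\in\mathcal{E}}$, leaders $\mathcal{V}_\ell=\{1,\dots,n_\ell\}$ and followers $\mathcal{V}_f=\{n_\ell+1,\dots,n\}$ (with $n_f=n-n_\ell$), and suppose the standing assumption below holds. Let $\mathcal{L}_{ff}$ be the follower–follower block of the bearing Laplacian. Then for all $k_P>0$ and $k_I>0$ the matrix $$A=\begin{bmatrix}-k_P\mathcal{L}_{ff} & -k_I I_{dn_f}\\ \mathcal{L}_{ff} & 0\end{bmatrix}\in\mathbb{R}^{2dn_f\times 2dn_f}$$ is Hurwitz (all its eigenvalues have negative real part).
   Context: For nonzero $x\in\mathbb{R}^d$, $P_x=I_d-\frac{xx^T}{\|x\|^2}$. The bearing Laplacian $\mathcal{L}\in\mathbb{R}^{dn\times dn}$ has $(i,j)$-th $d\times d$ block $0$ if $i\ne j,(i,j)\notin\mathcal{E}$; $-P_{g_{ij}^*}$ if $i\ne j,(i,j)\in\mathcal{E}$; $\sum_{k\in\mathcal{N}_i}P_{g_{ik}^*}$ if $i=j$ (where $\mathcal{N}_i$ is the neighbor set of $i$). $\mathcal{L}_{ff}$ is its lower-right $dn_f\times dn_f$ block (rows and columns of followers). Infinitesimal bearing rigidity: for $p=[p_1^T,\dots,p_n^T]^T$ with no two $p_i$ coinciding, orient each edge of $\mathcal{G}$, let $g_k=(p_j-p_i)/\|p_j-p_i\|$ for the $k$-th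 oriented edge $(i,j)$, $F_B(p)=[g_1^T,\dots,g_m^T]^T$, and $R_B(p)=\partial F_B/\partial p\in\mathbb{R}^{dm\times dn}$; the formation $\mathcal{G}(p)$ is infinitesimally bearing rigid if $\mathrm{Null}(R_B(p))=\mathrm{span}\{\mathbf{1}_n\otimes I_d,\,p\}$ (i.e. all infinitesimal bearing motions are translations and scalings). Standing assumption: there is a configuration $p^*$ with $(p_j^*-p_i^* )/\|p_j^*-p_i^*\|=g_{ij}^*$ for all $(i,j)\in\mathcal{E}$ (the target formation, whose leader positions coincide with the actual leader positions), this formation $\mathcal{G}(p^* )$ is infinitesimally bearing rigid, and there are at least two leaders ($n_\ell\ge2$). Under this assumption $\mathcal{L}_{ff}$ is symmetric positive definite. *)

(* Defs.v *)
From HB Require Import structures.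
From mathcomp Require Import all_boot all_order all_algebra.
From mathcomp Require Import reals topology normedtype derive.
Import numFieldNormedType.Exports.
From mathcomp Require Import complex.
Set Implicit Arguments. Unset Strict Implicit. Unset Printing Implicit Defensive.
Import Order.TTheory GRing.Theory Num.Theory.
Local Open Scope ring_scope.

Section BearingDefs.
Variable R : realType.

Definition vnorm (d : nat) (x : 'cV[R]_d) : R := Num.sqrt ((x^T *m x) ord0 ord0).

Definition projP (d : nat) (x : 'cV[R]_d) : 'M[R]_d :=
  1%:M - (vnorm x ^+ 2)^-1 *: (x *m x^T).

Definition bearing (d : nat) (x y : 'cV[R]_d) : 'cV[R]_d :=
  (vnorm (y - x))^-1 *: (y - x).

Definition lap_block (n d : nat) (adj : rel 'I_n) (g : 'I_n -> 'I_n -> 'cV[R]_d)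
  (i j : 'I_n) : 'M[R]_d :=
  if i == j then \sum_(k < n | adj i k) projP (g i k)
  else if adj i j then - projP (g i j) else 0.

End BearingDefs.

Lemma blk_idx_lt (m d a : nat) : (a < m * d)%N -> (a %/ d < m)%N.
Proof.
case: d => [|d]; first by rewrite muln0.
by move=> h; rewrite ltn_divLR.
Qed.

(* index a = i*d + r of a stacked vector in R^{dm}: agent i, coordinate r *)
Definition blk_agent (m d : nat) (a : 'I_(m * d)) : 'I_m :=
  Ordinal (blk_idx_lt (ltn_ord a)).

Lemma blk_coord_lt (m d : nat) (a : 'I_(m * d)) : (a %% d < d)%N.
Proof.
case: d a => [|d] a; last by rewrite ltn_mod.
by have := ltn_ord a; rewrite [X in (_ < X)%N]muln0.
Qed.

Definition blk_coord (m d : nat) (a : 'I_(m * d)) : 'I_d :=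
  Ordinal (blk_coord_lt a).

Definition blockmx_of {R : Type} (m d : nat) (B : 'I_m -> 'I_m -> 'M[R]_d) :
  'M[R]_(m * d) :=
  \matrix_(a, b) B (blk_agent a) (blk_agent b) (blk_coord a) (blk_coord b).

Section Laplacian.
Variable R : realType.

Definition bearing_laplacian (n d : nat) (adj : rel 'I_n)
  (g : 'I_n -> 'I_n -> 'cV[R]_d) : 'M[R]_(n * d) :=
  blockmx_of (lap_block adj g).

Definition L_ff (nl nf d : nat) (adj : rel 'I_(nl + nf))
  (g : 'I_(nl + nf) -> 'I_(nl + nf) -> 'cV[R]_d) : 'M[R]_(nf * d) :=
  drsubmx (castmx (mulnDl nl nf d, mulnDl nl nf d) (bearing_laplacian adj g)).

(* Edges are oriented as (i,j) with i < j.  R_B(p) dp is the directional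
   derivative of F_B at p along dp, whose block for the oriented edge (i,j)
   is d/dt g_ij(p + t dp) at t = 0.  Null(R_B(p)) = span{1_n (x) I_d, p}. *)
Definition inf_bearing_rigid (n d : nat) (adj : rel 'I_n) (p : 'I_n -> 'cV[R]_d) :
  Prop :=
  (forall i j : 'I_n, i != j -> p i != p j) /\
  (forall dp : 'I_n -> 'cV[R]_d,
     (forall (i j : 'I_n) (r : 'I_d), adj i j -> (i < j)%N ->
        derive1 (fun t : R => bearing (p i + t *: dp i) (p j + t *: dp j) r ord0) 0
        = 0)
     <->
     (exists (w : 'cV[R]_d) (c : R), forall i, dp i = w + c *: p i)).

Definition hurwitz (N : nat) (A : 'M[R]_N) : Prop :=
  forall lam : R[i], eigenvalue (map_mx (fun x : R => (x%:C)%C) A) lam ->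
    complex.Re lam < 0.

End Laplacian.

(* Main.v *)
Require Import Defs.
From HB Require Import structures.
From mathcomp Require Import all_boot all_order all_algebra.
From mathcomp Require Import reals topology normedtype derive.
Import numFieldNormedType.Exports.
From mathcomp Require Import complex.
Import Order.TTheory GRing.Theory Num.Theory.
Local Open Scope ring_scope.
From mathcomp Require Import ring lra.
Section Deriv.
Variable R : realType.

Lemma vnormZ d (c : R) (e : 'cV[R]_d) : vnorm (c *: e) = `|c| * vnorm e.
Proof.
rewrite /vnorm !linearZ /= -scalemxAl !mxE mulrA -expr2 sqrtrM ?sqr_ge0 // sqrtr_sqr. reflexivity.
Qed.

Lemma proj0_par d (e v : 'cV[R]_d) : projP e *m v = 0 ->
  v = ((vnorm e ^+ 2)^-1 * (e^T *m v) ord0 ord0) *: e.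
Proof.
rewrite /projP mulmxBl mul1mx => /eqP; rewrite subr_eq0 => /eqP hv.
rewrite {1}hv -scalemxAl -mulmxA -scalerA; congr (_ *: _).
apply/matrixP => i j; rewrite !mxE big_ord1 !ord1 mulrC.
by rewrite mxE.
Qed.

Lemma deriv_zero d (a b da db : 'cV[R]_d) (r : 'I_d) :
  projP (b - a) *m (db - da) = 0 ->
  derive1 (fun t : R => bearing (a + t *: da) (b + t *: db) r ord0) 0 = 0.
Proof.
move=> /proj0_par; set al := (_ * _) => hd.
set e := b - a.
have E t : (b + t *: db) - (a + t *: da) = (1 + t * al) *: e.
  rewrite scalerDl scale1r -scalerA -hd /e scalerBr; 
  by rewrite opprD addrACA addrC.
rewrite derive1E.
rewrite (@near_eq_derive _ _ _ _ (fun _ : R => ((vnorm e)^-1 * e r ord0))).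
  exact: derive_cst.
have hpos : 0 < (`|al| + 1)^-1 by rewrite invr_gt0 ltr_wpDl.
apply: filterS (nbhs0_lt hpos) => t ht.
rewrite /bearing /= E vnormZ !mxE.
have h1 : 0 < 1 + t * al.
  have : `|t * al| < 1.
    rewrite normrM; apply: (@le_lt_trans _ _ (`|t| * (`|al| + 1))).
      by rewrite ler_wpM2l // lerDl.
    by rewrite -ltr_pdivlMr ?mul1r // ltr_wpDl.
  rewrite ltr_norml => /andP [h _]; by rewrite -ltrBlDl sub0r.
rewrite (gtr0_norm h1) invfM [_^-1 * _]mulrC -mulrA mulKf //.
by rewrite gt_eqF.
Qed.

End Deriv.
Set Implicit Arguments. Unset Strict Implicit.
From mathcomp Require Import ring lra.
Section Cplx.
Variable R : realType.
Local Notation C := (fun x : R => (x%:C)%C).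

Lemma Re_add (x y : R[i]) : complex.Re (x + y) = complex.Re x + complex.Re y.
Proof. by case: x; case: y. Qed.
Lemma Im_add (x y : R[i]) : complex.Im (x + y) = complex.Im x + complex.Im y.
Proof. by case: x; case: y. Qed.

Lemma Re_sum I (r : seq I) (P : pred I) (F : I -> R[i]) :
  complex.Re (\sum_(i <- r | P i) F i) = \sum_(i <- r | P i) complex.Re (F i).
Proof. exact: (big_morph _ Re_add). Qed.
Lemma Im_sum I (r : seq I) (P : pred I) (F : I -> R[i]) :
  complex.Im (\sum_(i <- r | P i) F i) = \sum_(i <- r | P i) complex.Im (F i).
Proof. exact: (big_morph _ Im_add). Qed.

Lemma prod_ReIm (z w : R[i]) (k : R) :
  complex.Re (z * C k * conjc w) = k * (complex.Re z * complex.Re w + complex.Im z * complex.Im w)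
  /\ complex.Im (z * C k * conjc w) = k * (complex.Im z * complex.Re w - complex.Re z * complex.Im w).
Proof. case: z => a b; case: w => c e /=; split; ring. Qed.

Definition qf {N} (M : 'M[R]_N) (u : 'rV[R]_N) := (u *m M *m u^T) ord0 ord0.

Lemma qf_sum N (M : 'M[R]_N) u :
  qf M u = \sum_b \sum_a u ord0 a * M a b * u ord0 b.
Proof.
rewrite /qf !mxE; apply: eq_bigr => b _; rewrite mxE mxE big_distrl.
by [].
Qed.

Lemma cform_pd N (M : 'M[R]_N) :
  (forall a b, M a b = M b a) ->
  (forall u : 'rV[R]_N, u != 0 -> 0 < qf M u) ->
  forall z : 'rV[R[i]]_N, z != 0 ->
  exists2 Q, 0 < Q & (z *m map_mx C M *m (map_mx conjc z)^T) ord0 ord0 = C Q.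
Proof.
move=> Msym Mpd z zn0.
set u := map_mx (@complex.Re R) z; set v := map_mx (@complex.Im R) z.
have ge0 w : 0 <= qf M w.
  by have [->|/Mpd/ltW//] := eqVneq w 0; rewrite /qf !mul0mx mxE.
exists (qf M u + qf M v).
  have [u0|un0] := eqVneq u 0.
    have [v0|vn0] := eqVneq v 0.
      case/eqP: zn0; apply/matrixP => i j; rewrite mxE.
      move/matrixP: u0 => /(_ i j); move/matrixP: v0 => /(_ i j).
      rewrite !mxE; case: (z i j) => a b /= -> ->; by [].
    by rewrite u0 ltr_wpDl // Mpd.
  by rewrite ltr_pwDl // Mpd.
have E : (z *m map_mx C M *m (map_mx conjc z)^T) ord0 ord0 =
   \sum_b \sum_a z ord0 a * C (M a b) * conjc (z ord0 b).
  rewrite !mxE; apply: eq_bigr => b _; rewrite !mxE big_distrl /=.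
  by apply: eq_bigr => a _; rewrite !mxE.
apply/eqP; rewrite E eq_complex Re_sum Im_sum /=; apply/andP; split; apply/eqP.
  rewrite !qf_sum -big_split /=; apply: eq_bigr => b _.
  rewrite Re_sum -big_split /=; apply: eq_bigr => a _.
  rewrite (prod_ReIm _ _ _).1 /u /v !mxE; ring.
under eq_bigr do rewrite Im_sum.
under eq_bigr do under eq_bigr do rewrite (prod_ReIm _ _ _).2 mulrBr.
under eq_bigr do rewrite sumrB.
rewrite sumrB; apply/eqP; rewrite subr_eq0; apply/eqP; rewrite [RHS]exchange_big /=.
apply: eq_bigr => a _; apply: eq_bigr => b _; rewrite Msym; ring.
Qed.

End Cplx.

Section Hur.
Variable R : realType.
Local Notation C := (fun x : R => (x%:C)%C).

Lemma scale_entry (K : pzRingType) m n (a : K) (A : 'M[K]_(m, n)) i j :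
  (a *: A) i j = a * A i j.
Proof. by rewrite mxE. Qed.

Lemma add_entry (K : pzRingType) m n (A B : 'M[K]_(m, n)) i j :
  (A + B) i j = A i j + B i j.
Proof. by rewrite mxE. Qed.

Lemma qf1_pd N (u : 'rV[R]_N) : u != 0 -> 0 < qf 1%:M u.
Proof.
move=> un0; rewrite qf_sum.
have [j uj] : exists j, u ord0 j != 0.
  apply/existsP; move: un0; apply: contraR; rewrite negb_exists => /forallP h.
  apply/eqP/matrixP => i k; rewrite ord1 mxE; exact/eqP/negbNE/h.
rewrite (bigD1 j) //= ltr_pwDl //.
  rewrite (bigD1 j) //= big1 ?addr0.
    by rewrite mxE eqxx mulr1 -expr2 lt_def sqr_ge0 andbT sqrf_eq0 uj.
  by move=> i /negbTE hij; rewrite mxE hij mulr0 mul0r.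
apply: sumr_ge0 => b _; rewrite (bigD1 b) //= big1 ?addr0.
  by rewrite mxE eqxx mulr1 -expr2 sqr_ge0.
by move=> i /negbTE hij; rewrite mxE hij mulr0 mul0r.
Qed.

Lemma hurwitz_pd N (L : 'M[R]_N) (kP kI : R) :
  (forall a b, L a b = L b a) ->
  (forall u : 'rV[R]_N, u != 0 -> 0 < qf L u) ->
  0 < kP -> 0 < kI ->
  hurwitz (block_mx (- kP *: L) (- kI *: 1%:M) L (0 : 'M[R]_N)).
Proof.
move=> Lsym Lpd kP0 kI0 lam /eigenvalueP [w hw wn0].
move: hw; rewrite map_block_mx -[w]hsubmxK mul_row_block scale_row_mx.
set x := lsubmx w; set y := rsubmx w.
move=> /eq_row_mx [h1 h2].
rewrite map_mx0 mulmx0 addr0 map_mxZ map_mx1 -scalemxAr mulmx1 in h2.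
rewrite map_mxZ -scalemxAr in h1.
set Lc := map_mx _ L in h1 *.
have [x0|xn0] := eqVneq x 0.
  move: h1 h2; rewrite x0 mul0mx scaler0 add0r scaler0 => h1 h2.
  have y0 : y = 0.
    apply/eqP; apply: contraT => yn0.
    have [Q Q0 hQ] := cform_pd Lsym Lpd yn0.
    move: hQ; rewrite h1 mul0mx mxE => /(congr1 (@complex.Re R)) /= Q00.
    by move: Q0; rewrite -Q00 ltxx.
  by move: wn0; rewrite -[w]hsubmxK -/x -/y x0 y0 row_mx0 eqxx.
set xs := (map_mx conjc x)^T.
have [Q Q0 hQ] := cform_pd Lsym Lpd xn0.
have sym1 : forall a b : 'I_N, (1%:M : 'M[R]_N) a b = 1%:M b a.
  by move=> a b; rewrite !mxE eq_sym.
have [Nn N0 hN] := cform_pd sym1 (@qf1_pd N) xn0.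
rewrite map_mx1 mulmx1 -/xs in hN.
have hQ' : (x *m Lc *m xs) ord0 ord0 = C Q := hQ.
have e1 := congr1 (fun m => (m *m xs) ord0 ord0) h1.
have e2 := congr1 (fun m => (m *m (Lc *m xs)) ord0 ord0) h2.
rewrite /= mulmxDl -!scalemxAl add_entry !scale_entry in e1.
rewrite /= -!scalemxAl !scale_entry !mulmxA in e2.
move: e1 e2; rewrite hQ' hN; set b := (y *m Lc *m xs) ord0 ord0 => e1 e2.
have key : C (- kP) * lam * C Q + C (- kI) * C Q = lam ^+ 2 * C Nn.
  by rewrite /= in e1 e2 *; rewrite e2 expr2 -[lam * lam * _]mulrA -e1; ring.
clear -key Q0 N0 kP0 kI0.
move: key; case: lam => a c key /=.
have kr := congr1 (@complex.Re R) key; have ki := congr1 (@complex.Im R) key.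
rewrite /= in kr ki.
have kr' : kP * a * Q + kI * Q + (a * a - c * c) * Nn = 0.
  by move/eqP: kr; rewrite -subr_eq0 -oppr_eq0 => /eqP <-; ring.
have ki' : c * (kP * Q + 2 * a * Nn) = 0.
  by move/eqP: ki; rewrite -subr_eq0 -oppr_eq0 => /eqP <-; ring.
rewrite ltNge; apply/negP => a0.
have hpos : 0 < kP * Q + 2 * a * Nn.
  have h1 : 0 < kP * Q by rewrite mulr_gt0.
  have h2 : 0 <= 2 * a * Nn by rewrite !mulr_ge0 // ltW.
  lra.
move/eqP: ki'; rewrite mulf_eq0 (gt_eqF hpos) orbF => /eqP c0.
move: kr'; rewrite c0 mulr0 subr0 => kr'.
have h1 : 0 <= kP * a * Q by rewrite !mulr_ge0 // ltW.
have h2 : 0 < kI * Q by rewrite mulr_gt0.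
have h3 : 0 <= a * a * Nn by rewrite !mulr_ge0 // ltW.
lra.
Qed.
End Hur.
Set Implicit Arguments. Unset Strict Implicit.
Section Idx.

Lemma idx_lt n d (i : 'I_n) (r : 'I_d) : (i * d + r < n * d)%N.
Proof.
apply: (@leq_trans (i * d + d)); first by rewrite ltn_add2l.
by rewrite -mulSnr leq_mul2r ltn_ord orbT.
Qed.

Definition idx n d (i : 'I_n) (r : 'I_d) : 'I_(n * d) := Ordinal (idx_lt i r).

Lemma agent_idx n d (i : 'I_n) (r : 'I_d) : blk_agent (idx i r) = i.
Proof.
apply: val_inj => /=; have d0 : (0 < d)%N by case: r => r /= /(leq_trans _); apply.
by rewrite divnMDl // divn_small ?addn0.
Qed.

Lemma coord_idx n d (i : 'I_n) (r : 'I_d) : blk_coord (idx i r) = r.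
Proof. by apply: val_inj => /=; rewrite modnMDl modn_small. Qed.

Lemma idx_agent n d (a : 'I_(n * d)) : idx (blk_agent a) (blk_coord a) = a.
Proof. by apply: val_inj => /=; rewrite -divn_eq. Qed.

Lemma sum_idx (R : nmodType) n d (F : 'I_(n * d) -> R) :
  \sum_a F a = \sum_i \sum_r F (idx i r).
Proof.
rewrite pair_big /=.
rewrite (reindex (fun a : 'I_(n * d) => (blk_agent a, blk_coord a))) /=.
  by apply: eq_bigr => a _; rewrite idx_agent.
exists (fun p : 'I_n * 'I_d => idx p.1 p.2) => [a _|[i r] _] /=.
  exact: idx_agent.
by rewrite agent_idx coord_idx.
Qed.

End Idx.
Section Lap.
Variable R : realType.

Lemma Lff_entry nl nf d (adj : rel 'I_(nl + nf)) (g : 'I_(nl + nf) -> 'I_(nl + nf) -> 'cV[R]_d)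
  (k l : 'I_nf) (r s : 'I_d) :
  L_ff adj g (idx k r) (idx l s) = lap_block adj g (rshift nl k) (rshift nl l) r s.
Proof.
rewrite /L_ff /bearing_laplacian /blockmx_of mxE mxE castmxE mxE.
have E (m : 'I_nf) (t : 'I_d) :
  cast_ord (esym (mulnDl nl nf d)) (rshift (nl * d) (idx m t)) = idx (rshift nl m) t.
  by apply: val_inj => /=; rewrite mulnDl addnA.
by rewrite !E !agent_idx !coord_idx.
Qed.

Lemma projP_sym d (x : 'cV[R]_d) : (projP x)^T = projP x.
Proof. by rewrite /projP linearB /= trmx1 linearZ /= trmx_mul trmxK. Qed.

Lemma vnorm_sq d (x : 'cV[R]_d) : vnorm x ^+ 2 = (x^T *m x) ord0 ord0.
Proof.
rewrite /vnorm sqr_sqrtr // mxE; apply: sumr_ge0 => i _; rewrite mxE -expr2.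
exact: sqr_ge0.
Qed.

Lemma projP_idem d (x : 'cV[R]_d) : projP x *m projP x = projP x.
Proof.
have XX : (x *m x^T) *m (x *m x^T) = vnorm x ^+ 2 *: (x *m x^T).
  rewrite mulmxA -[x *m x^T *m x]mulmxA [x^T *m x]mx11_scalar mul_mx_scalar.
  by rewrite -scalemxAl vnorm_sq.
rewrite /projP mulmxBl mulmxBr !mul1mx mulmxBr mulmx1 -scalemxAl -scalemxAr XX !scalerA.
have [->|n0] := eqVneq (vnorm x ^+ 2) 0.
  by rewrite invr0 ?mul0r ?mulr0 !scale0r !subr0.
by rewrite -mulrA mulVf // mulr1 subrr subr0.
Qed.

Definition bf d (M : 'M[R]_d) (v w : 'cV[R]_d) : R := (v^T *m M *m w) ord0 ord0.

Lemma bfDl d (M : 'M[R]_d) v v' w : bf M (v + v') w = bf M v w + bf M v' w.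
Proof. by rewrite /bf linearD /= !mulmxDl add_entry. Qed.
Lemma bfDr d (M : 'M[R]_d) v w w' : bf M v (w + w') = bf M v w + bf M v w'.
Proof. by rewrite /bf !mulmxDr add_entry. Qed.
Lemma bfNl d (M : 'M[R]_d) v w : bf M (- v) w = - bf M v w.
Proof. by rewrite /bf linearN /= !mulNmx mxE. Qed.
Lemma bfNr d (M : 'M[R]_d) v w : bf M v (- w) = - bf M v w.
Proof. by rewrite /bf mulmxN mxE. Qed.
Lemma bfDM d (M M' : 'M[R]_d) v w : bf (M + M') v w = bf M v w + bf M' v w.
Proof. by rewrite /bf mulmxDr mulmxDl add_entry. Qed.
Lemma bfNM d (M : 'M[R]_d) v w : bf (- M) v w = - bf M v w.
Proof. by rewrite /bf mulmxN mulNmx mxE. Qed.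
Lemma bf0M d (v w : 'cV[R]_d) : bf 0 v w = 0.
Proof. by rewrite /bf mulmx0 mul0mx mxE. Qed.
Lemma bf0l d (M : 'M[R]_d) w : bf M 0 w = 0.
Proof. by rewrite /bf trmx0 !mul0mx mxE. Qed.
Lemma bf_sumM d I (r : seq I) (Pr : pred I) (F : I -> 'M[R]_d) v w :
  bf (\sum_(i <- r | Pr i) F i) v w = \sum_(i <- r | Pr i) bf (F i) v w.
Proof.
elim/big_rec2: _ => [|i y M _ <-]; first exact: bf0M.
by rewrite bfDM.
Qed.
Lemma bfBl d (M : 'M[R]_d) v v' w : bf M (v - v') w = bf M v w - bf M v' w.
Proof. by rewrite bfDl bfNl. Qed.
Lemma bfBr d (M : 'M[R]_d) v w w' : bf M v (w - w') = bf M v w - bf M v w'.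
Proof. by rewrite bfDr bfNr. Qed.

Lemma bf_symm d (M : 'M[R]_d) v w : M^T = M -> bf M v w = bf M w v.
Proof.
move=> hM; rewrite /bf -[in LHS](trmxK (v^T *m M *m w)) mxE.
by rewrite !trmx_mul trmxK hM mulmxA.
Qed.

Lemma bf_sum d (M : 'M[R]_d) v w :
  bf M v w = \sum_s \sum_r v r ord0 * M r s * w s ord0.
Proof.
rewrite /bf mxE; apply: eq_bigr => s _; rewrite mxE big_distrl /=.
by apply: eq_bigr => r _; rewrite mxE.
Qed.

Lemma bf_proj d (x v : 'cV[R]_d) :
  bf (projP x) v v = \sum_r ((projP x *m v) r ord0) ^+ 2.
Proof.
rewrite /bf -[in LHS]projP_idem -{1}(projP_sym x) mulmxA -trmx_mul -mulmxA.
rewrite mxE; apply: eq_bigr => r _; by rewrite mxE expr2.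
Qed.

Lemma bf_proj_ge0 d (x v : 'cV[R]_d) : 0 <= bf (projP x) v v.
Proof. rewrite bf_proj; apply: sumr_ge0 => r _; exact: sqr_ge0. Qed.

Lemma bf_proj_eq0 d (x v : 'cV[R]_d) : bf (projP x) v v = 0 -> projP x *m v = 0.
Proof.
rewrite bf_proj => h0.
have h := psumr_eq0P (fun i _ => sqr_ge0 ((projP x *m v) i ord0)) h0.
apply/matrixP => r j; rewrite ord1 [RHS]mxE.
by apply/eqP; rewrite -sqrf_eq0; apply/eqP; exact: h.
Qed.

End Lap.
Section LapId.
Variable R : realType.
Variables (n d : nat) (adj : rel 'I_n) (P : 'I_n -> 'I_n -> 'M[R]_d).
Hypothesis adj_sym : symmetric adj.
Hypothesis adj_irr : irreflexive adj.
Hypothesis Pswap : forall i k, adj i k -> P i k = P k i.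
Variable x : 'I_n -> 'cV[R]_d.

Definition Bl i j := if i == j then \sum_(k < n | adj i k) P i k
  else if adj i j then - P i j else 0.

Definition Aik i k := bf (P i k) (x i) (x i) - bf (P i k) (x i) (x k).

Lemma row_sum i : \sum_j bf (Bl i j) (x i) (x j) = \sum_(k | adj i k) Aik i k.
Proof.
rewrite (bigD1 i) //= /Bl eqxx bf_sumM /Aik sumrB; congr (_ + _).
rewrite -sumrN big_mkcond [RHS]big_mkcond /=; apply: eq_bigr => j _.
have [->|nij] := eqVneq j i; first by rewrite adj_irr.
rewrite /=.
by case: (adj i j); rewrite ?bfNM ?bf0M.
Qed.

Lemma lap_id : 2 * \sum_i \sum_j bf (Bl i j) (x i) (x j) =
  \sum_i \sum_(k | adj i k) bf (P i k) (x i - x k) (x i - x k).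
Proof.
have E i k : adj i k -> bf (P i k) (x i - x k) (x i - x k) = Aik i k + Aik k i.
  move=> hik; rewrite /Aik -(Pswap hik) !bfBl !bfBr.
  rewrite !opprB !addrA. 
  set a := bf _ (x i) (x i); set b := bf _ (x i) (x k).
  set c := bf _ (x k) (x i); set e := bf _ (x k) (x k).
  by [].
rewrite [RHS](eq_bigr (fun i => \sum_(k | adj i k) (Aik i k + Aik k i))); last first.
  by move=> i _; apply: eq_bigr => k; apply: E.
under eq_bigr do rewrite big_split /=.
rewrite big_split /= mulr2n mulrDl mul1r.
have -> : \sum_i \sum_(k | adj i k) Aik k i = \sum_i \sum_(k | adj i k) Aik i k.
  under eq_bigr do rewrite big_mkcond /=.
  rewrite exchange_big /=; apply: eq_bigr => k _.
  by rewrite [RHS]big_mkcond; apply: eq_bigr => i _; rewrite adj_sym.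
by congr (_ + _); apply: eq_bigr => i _; rewrite row_sum.
Qed.

End LapId.
Lemma split_l m n (i : 'I_m) : split (lshift n i) = inl i.
Proof. exact: (unsplitK (inl _)). Qed.
Lemma split_r m n (i : 'I_n) : split (rshift m i) = inr i.
Proof. exact: (unsplitK (inr _)). Qed.

Section Main.
Variable R : realType.
Variables (nl nf d : nat) (adj : rel 'I_(nl + nf))
  (g : 'I_(nl + nf) -> 'I_(nl + nf) -> 'cV[R]_d).

Lemma bf0r d' (M : 'M[R]_d') v : bf M v 0 = 0.
Proof. by rewrite /bf mulmx0 mxE. Qed.

Definition xv (u : 'rV[R]_(nf * d)) (i : 'I_(nl + nf)) : 'cV[R]_d :=
  match split i with inl _ => 0 | inr k => \col_r u ord0 (idx k r) end.

Lemma xv_l u (i : 'I_nl) : xv u (lshift nf i) = 0.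
Proof. by rewrite /xv split_l. Qed.
Lemma xv_r u (k : 'I_nf) : xv u (rshift nl k) = \col_r u ord0 (idx k r).
Proof. by rewrite /xv split_r. Qed.

Definition Pg i k := projP (g i k).

Lemma lap_Bl i j : lap_block adj g i j = Bl adj Pg i j.
Proof. by []. Qed.

Lemma qf_Lff u :
  qf (L_ff adj g) u = \sum_i \sum_j bf (Bl adj Pg i j) (xv u i) (xv u j).
Proof.
rewrite qf_sum [RHS]big_split_ord /= [X in _ = X + _]big1 ?add0r; last first.
  by move=> i _; apply: big1 => j _; rewrite xv_l bf0l.
transitivity (\sum_(l < nf) \sum_(s < d) \sum_(k < nf) \sum_(r < d)
  u ord0 (idx k r) * lap_block adj g (rshift nl k) (rshift nl l) r s * u ord0 (idx l s)).
  rewrite sum_idx; apply: eq_bigr => l _; apply: eq_bigr => s _.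
  rewrite sum_idx; apply: eq_bigr => k _; apply: eq_bigr => r _.
  by rewrite Lff_entry.
symmetry.
rewrite (eq_bigr (fun k => \sum_(l < nf) bf (Bl adj Pg (rshift nl k) (rshift nl l))
   (xv u (rshift nl k)) (xv u (rshift nl l)))); last first.
  move=> k _; rewrite big_split_ord /= big1 ?add0r //.
  by move=> j _; rewrite xv_l bf0r.
rewrite exchange_big /=; apply: eq_bigr => l _.
under eq_bigr do rewrite bf_sum.
rewrite exchange_big /=; apply: eq_bigr => s _.
apply: eq_bigr => k _; apply: eq_bigr => r _.
by rewrite !xv_r !mxE.
Qed.

Lemma vnorm_eq0 d' (x : 'cV[R]_d') : vnorm x = 0 -> x = 0.
Proof.
move=> h; have : vnorm x ^+ 2 = 0 by rewrite h expr2 mulr0.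
rewrite vnorm_sq mxE => h0.
have hge : forall i : 'I_d', true -> 0 <= x^T ord0 i * x i ord0.
  by move=> i _; rewrite mxE -expr2 sqr_ge0.
have h1 := psumr_eq0P hge h0.
apply/matrixP => r j; rewrite ord1 [RHS]mxE.
by have /eqP := h1 r isT; rewrite mxE -expr2 sqrf_eq0 => /eqP.
Qed.

Lemma projP_scale d' (c : R) (x : 'cV[R]_d') : c != 0 -> projP (c *: x) = projP x.
Proof.
move=> c0; rewrite /projP vnormZ exprMn real_normK ?num_real //.
rewrite [(c *: x)^T]linearZ /= -scalemxAl -scalemxAr scalerA scalerA.
congr (_ - _ *: _).
have [->|v0] := eqVneq (vnorm x ^+ 2) 0; first by rewrite mulr0 !invr0 !mul0r.
by rewrite invfM -!mulrA mulrCA -expr2 mulVf ?mulr1 // sqrf_eq0.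
Qed.

Lemma projP_bearing d' (a b : 'cV[R]_d') : a != b -> projP (bearing a b) = projP (b - a).
Proof.
move=> ab; rewrite /bearing projP_scale // invr_eq0; apply/negP => /eqP /vnorm_eq0.
by move/eqP; rewrite subr_eq0 eq_sym (negbTE ab).
Qed.

Lemma projP_opp d' (x : 'cV[R]_d') : projP (- x) = projP x.
Proof. by rewrite -scaleN1r projP_scale // oppr_eq0 oner_eq0. Qed.

Hypothesis adj_sym : symmetric adj.
Hypothesis adj_irr : irreflexive adj.
Variable p : 'I_(nl + nf) -> 'cV[R]_d.
Hypothesis hg : forall i j, adj i j -> g i j = bearing (p i) (p j).
Hypothesis hrig : inf_bearing_rigid adj p.
Hypothesis hnl : (2 <= nl)%N.

Lemma adj_neq i k : adj i k -> i != k.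
Proof. by move=> h; apply/eqP => e; move: h; rewrite e adj_irr. Qed.

Lemma Pg_adj i k : adj i k -> Pg i k = projP (p k - p i).
Proof. by move=> h; rewrite /Pg hg // projP_bearing //; apply: hrig.1; apply: adj_neq. Qed.

Lemma Pswap i k : adj i k -> Pg i k = Pg k i.
Proof.
move=> h; rewrite Pg_adj // Pg_adj; last by rewrite adj_sym.
by rewrite -opprB projP_opp.
Qed.

Lemma Nentry (K : pzRingType) m n (A : 'M[K]_(m, n)) i j : (- A) i j = - A i j.
Proof. by rewrite mxE. Qed.

Lemma Pentry_sym (x : 'cV[R]_d) r s : projP x r s = projP x s r.
Proof. by rewrite -{1}projP_sym mxE. Qed.

Lemma Lff_sym a b : L_ff adj g a b = L_ff adj g b a.
Proof.
rewrite -(idx_agent a) -(idx_agent b) !Lff_entry /lap_block.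
set i := rshift nl _; set j := rshift nl _.
rewrite [j == i]eq_sym; have [<-|nij] := eqVneq i j.
  by rewrite !summxE; apply: eq_bigr => k _; rewrite Pentry_sym.
rewrite [adj j i]adj_sym; case hij: (adj i j); last by rewrite !mxE.
by rewrite !Nentry -/(Pg i j) -/(Pg j i) Pswap // Pentry_sym.
Qed.

Lemma Lff_pd u : u != 0 -> 0 < qf (L_ff adj g) u.
Proof.
move=> un0.
have H2 := lap_id adj_sym adj_irr Pswap (xv u).
rewrite qf_Lff.
set Q := \sum_i _ in H2 *.
set S := \sum_i _ in H2.
have Sge : 0 <= S.
  by apply: sumr_ge0 => i _; apply: sumr_ge0 => k _; apply: bf_proj_ge0.
have Qge : 0 <= Q by rewrite -(@pmulr_rge0 _ 2) // H2.
rewrite lt_def Qge andbT; apply/negP => /eqP Q0.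
move: H2; rewrite Q0 mulr0 => /esym S0.
have hge1 : forall i : 'I_(nl + nf), true ->
   0 <= \sum_(k | adj i k) bf (Pg i k) (xv u i - xv u k) (xv u i - xv u k).
  by move=> i _; apply: sumr_ge0 => k _; apply: bf_proj_ge0.
have h1 := psumr_eq0P hge1 S0.
have hz : forall i k, adj i k -> Pg i k *m (xv u i - xv u k) = 0.
  move=> i k hik; apply: bf_proj_eq0.
  have hge2 : forall k : 'I_(nl + nf), adj i k ->
     0 <= bf (Pg i k) (xv u i - xv u k) (xv u i - xv u k).
    by move=> k' _; apply: bf_proj_ge0.
  exact: (psumr_eq0P hge2 (h1 i isT)).
have [w [c hwc]] : exists (w : 'cV[R]_d) (c : R), forall i, xv u i = w + c *: p i.
  apply: (hrig.2 (xv u)).1 => i j r hij _; apply: deriv_zero.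
  by rewrite -Pg_adj // -opprB mulmxN hz // oppr0.
have lt0 : (0 < nl)%N by apply: leq_trans hnl.
set i0 := lshift nf (Ordinal lt0); set i1 := lshift nf (Ordinal hnl).
have e0 := hwc i0; have e1 := hwc i1.
rewrite xv_l in e0; rewrite xv_l in e1.
have : c *: (p i0 - p i1) = 0.
  have -> : c *: (p i0 - p i1) = (w + c *: p i0) - (w + c *: p i1).
    by rewrite scalerBr opprD addrACA subrr add0r.
  by rewrite -e0 -e1 subrr.
move/eqP; rewrite scaler_eq0 subr_eq0 => /orP [/eqP c0|].
  move: e0; rewrite c0 scale0r addr0 => w0.
  case/eqP: un0; apply/matrixP => i a; rewrite ord1 [RHS]mxE -(idx_agent a).
  have := hwc (rshift nl (blk_agent a)); rewrite -w0 c0 scale0r addr0 xv_r.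
  by move/matrixP => /(_ (blk_coord a) ord0); rewrite !mxE.
apply/negP; apply: hrig.1.
by apply/eqP => /(congr1 val).
Qed.

End Main.
Unset Implicit Arguments.

(* n = nl + nf agents in R^d, leaders 0..nl-1, followers nl..n-1 *)
Theorem lemma3 (R : realType) (nl nf d : nat)
  (adj : rel 'I_(nl + nf)) (g : 'I_(nl + nf) -> 'I_(nl + nf) -> 'cV[R]_d) :
  (2 <= nl + nf)%N -> (2 <= d)%N ->
  symmetric adj -> irreflexive adj ->
  (* standing assumption *)
  (exists pstar : 'I_(nl + nf) -> 'cV[R]_d,
      (forall i j, adj i j -> g i j = bearing (pstar i) (pstar j)) /\
      inf_bearing_rigid adj pstar) ->
  (2 <= nl)%N ->
  forall kP kI : R, 0 < kP -> 0 < kI ->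
  hurwitz (block_mx (- kP *: L_ff adj g) (- kI *: 1%:M)
                    (L_ff adj g) (0 : 'M[R]_(nf * d))).
Proof.
move=> _ _ asym airr [p [hg hrig]] hnl kP kI kP0 kI0.
apply: hurwitz_pd => //.
  exact: (Lff_sym asym airr hg hrig).
exact: (Lff_pd asym airr hg hrig hnl).
Qed.
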